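(* Let $Q=[(n_1,q_1),\dots,(n_m,q_m)]$ be a compatible pointed irregular type. Then a list $Q'=[(n'_1,q'_1),\dots,(n'_p,q'_p)]$ satisfies $Q'\sim Q$ if and only if $Q'$ is a compatible pointed irregular type whose labelled fission datum equals that of $Q$, i.e. $p=m$, $n'_i=n_i$ and $\mathrm{Levels}(q'_i)=\mathrm{Levels}(q_i)$ for all $i$, and $f_{q'_i,q'_j}=f_{q_i,q_j}$ for all $i\ne j$.
   Context: Exponential factors: finite sums $q=\sum_ka_kx^k$, $a_k\in\mathbb C$, $k\in\mathbb Q_{>0}$; $E(q)$ = set of exponents with $a_k\ne0$; $\mathrm{slope}(q)=\max E(q)$ ($0$ if $q=0$); $\mathrm{ram}(q)$ = least $r\ge1$ with $q\in x^{1/r}\mathbb C[x^{1/r}]$. Galois operator $\sigma(\sum a_kx^k)=\sum a_ke^{-2\pi\sqrt{-1}k}x^k$; Stokes circle $\langle q\rangle=\{\sigma^i(q)\}$. Truncation $\tau_k(\sum a_{k'}x^{k'})=\sum_{k'\ge k}a_{k'}x^{k'}$. $\mathrm{Levels}(q)=\{\mathrm{slope}(q-\sigma^i(q)):i\in\mathbb Z\}\setminus\{0\}$. Fission exponent: for $q,\hat q$ in distinct orbits, if some $k\in E(q)$ has $\langle\tau_k(q)\rangle=\langle\tau_k(\hat q)\rangle$, let $k$ be the smallest, $q_c=\tau_k(q)$, $\hat q_c=\tau_k(\hat q)$; else $q_c=\hat q_c=0$; $f_{q,\hat q}=\max(\mathrm{slope}(q-q_c),\mathrm{slope}(\hat q-\hat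 q_c))$. Pointed irregular type: $Q=[(n_1,q_1),\dots,(n_m,q_m)]$ with $n_i\in\mathbb N_{>0}$ and $q_i$ in pairwise distinct Galois orbits. $Q$ is compatible if for all $k\in\mathbb Q_{>0}$ and all $i,j$, $\langle\tau_k(q_i)\rangle=\langle\tau_k(q_j)\rangle$ implies $\tau_k(q_i)=\tau_k(q_j)$. Its labelled fission datum is the list $[(n_i,\mathrm{Levels}(q_i))]_{i=1}^m$ together with the numbers $f_{q_i,q_j}$ ($i\ne j$). For a list $Q'$ of pairs $(n'_i,q'_i)$ with $n'_i\in\mathbb N_{>0}$ and $q'_i$ exponential factors, $Q'\sim Q$ means $p=m$, $n'_i=n_i$, and $\mathrm{slope}(\sigma^k(q'_i)-\sigma^l(q'_j))=\mathrm{slope}(\sigma^k(q_i)-\sigma^l(q_j))$ for all $1\le i,j\le m$, $0\le k\le\mathrm{ram}(q_i)$, $0\le l\le\mathrm{ram}(q_j)$. *)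

(* Defs.v *)
From mathcomp Require Import all_boot all_order all_algebra.
From mathcomp Require Import finmap.
From mathcomp Require Import complex.
From mathcomp Require Import boolp reals trigo.
Import Order.TTheory GRing.Theory Num.Theory.

Set Implicit Arguments.
Unset Strict Implicit.
Unset Printing Implicit Defensive.

Local Open Scope ring_scope.
Local Open Scope complex_scope.

Section ExpFactors.
Variable R : realType.

(* An exponential factor  q = sum_k a_k x^k  (k rational, a_k complex) is
   represented by its finitely supported coefficient function k |-> a_k. *)
Definition EF := {fsfun rat -> R[i] with 0}.

Definition expfac (q : EF) : Prop := forall k : rat, k \in finsupp q -> 0 < k.

Definition ef0 : EF := [fsfun k in (fset0 : {fset rat}) => (0 : R[i])].

Definition zeta (t : rat) : R[i] :=
  cos (2 * pi * ratr t) -i* sin (2 * pi * ratr t).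
Definition zetainv (t : rat) : R[i] :=
  cos (2 * pi * ratr t) +i* sin (2 * pi * ratr t).

Definition gal (q : EF) : EF := [fsfun k in finsupp q => q k * zeta k].
Definition galinv (q : EF) : EF := [fsfun k in finsupp q => q k * zetainv k].

Definition galz (i : int) (q : EF) : EF :=
  match i with
  | Posz n => iter n gal q
  | Negz n => iter n.+1 galinv q
  end.

(* <a> = <b> : equality of the Stokes circles (Galois orbits) as sets *)
Definition orbit_eq (a b : EF) : Prop :=
  forall c : EF, (exists i : int, c = galz i a) <-> (exists i : int, c = galz i b).

Definition trunc (k : rat) (q : EF) : EF :=
  [fsfun k' in finsupp q => if k <= k' then q k' else 0].

Definition subEF (p q : EF) : EF :=
  [fsfun k in fsetU (finsupp p) (finsupp q) => p k - q k].

(* slope = max E(q), 0 if q = 0 (exponents are positive) *)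
Definition slope (q : EF) : rat := \big[Num.max/0]_(k <- finsupp q) k.

(* ram(q) = least r >= 1 with q in x^{1/r} C[x^{1/r}] *)
Definition ram_pred (q : EF) : pred nat :=
  fun r => (0 < r)%N && all (fun k : rat => k * r%:R \is a Num.int) (finsupp q).

Definition ram (q : EF) : nat :=
  match pselect (exists r, ram_pred q r) with
  | left h => ex_minn h
  | right _ => 1%N
  end.

Definition levels (q : EF) : rat -> Prop :=
  fun x => (exists i : int, x = slope (subEF q (galz i q))) /\ x != 0.

Definition min_seq (s : seq rat) : rat := \big[Num.min/head 0 s]_(k <- s) k.

Definition fission (q qh : EF) : rat :=
  let S := [seq k <- finsupp q | `[< orbit_eq (trunc k q) (trunc k qh) >] ] in
  let k := min_seq S in
  let qc := if S is [::] then ef0 else trunc k q in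
  let qhc := if S is [::] then ef0 else trunc k qh in
  Num.max (slope (subEF q qc)) (slope (subEF qh qhc)).

(* lists Q = [(n_1,q_1),...,(n_m,q_m)], indexed from 0 *)
Definition dflt_pair : nat * EF := (0%N, ef0).
Definition nQ (Q : seq (nat * EF)) (i : nat) : nat := (nth dflt_pair Q i).1.
Definition qQ (Q : seq (nat * EF)) (i : nat) : EF := (nth dflt_pair Q i).2.

Definition pointed_irregular_type (Q : seq (nat * EF)) : Prop :=
  (forall i, (i < size Q)%N -> (0 < nQ Q i)%N /\ expfac (qQ Q i)) /\
  (forall i j, (i < size Q)%N -> (j < size Q)%N -> i <> j ->
     ~ orbit_eq (qQ Q i) (qQ Q j)).

Definition compatible (Q : seq (nat * EF)) : Prop :=
  pointed_irregular_type Q /\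
  forall k : rat, 0 < k -> forall i j, (i < size Q)%N -> (j < size Q)%N ->
    orbit_eq (trunc k (qQ Q i)) (trunc k (qQ Q j)) ->
    trunc k (qQ Q i) = trunc k (qQ Q j).

Definition same_fission_datum (Q' Q : seq (nat * EF)) : Prop :=
  size Q' = size Q /\
  (forall i, (i < size Q)%N -> nQ Q' i = nQ Q i /\ levels (qQ Q' i) = levels (qQ Q i)) /\
  (forall i j, (i < size Q)%N -> (j < size Q)%N -> i <> j ->
     fission (qQ Q' i) (qQ Q' j) = fission (qQ Q i) (qQ Q j)).

Definition sim (Q' Q : seq (nat * EF)) : Prop :=
  size Q' = size Q /\
  (forall i, (i < size Q)%N -> nQ Q' i = nQ Q i) /\
  (forall i j, (i < size Q)%N -> (j < size Q)%N ->
   forall k l : nat, (k <= ram (qQ Q i))%N -> (l <= ram (qQ Q j))%N ->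
     slope (subEF (galz k (qQ Q' i)) (galz l (qQ Q' j)))
     = slope (subEF (galz k (qQ Q i)) (galz l (qQ Q j)))).

End ExpFactors.

(* Main.v *)
Require Import Defs.
From mathcomp Require Import all_boot all_order all_algebra.
From mathcomp Require Import finmap complex boolp reals trigo.
From mathcomp Require Import zify.
Import Order.TTheory GRing.Theory Num.Theory.
Set Implicit Arguments.
Unset Strict Implicit.
Unset Printing Implicit Defensive.
Local Open Scope ring_scope.
Local Open Scope complex_scope.

Section S.
Variable R : realType.
Local Notation EF := (EF R).
Local Notation zeta := (@zeta R).

Lemma zetaD a b : zeta (a + b) = zeta a * zeta b.
Proof.
rewrite /zeta rmorphD /= mulrDr cosD sinD.
apply/eqP; rewrite eq_complex /=; apply/andP; split; apply/eqP.
  by rewrite mulrNN.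
by rewrite mulrN mulNr -opprD addrC.
Qed.

Lemma zeta0 : zeta 0 = 1.
Proof. by rewrite /zeta rmorph0 mulr0 cos0 sin0 oppr0. Qed.

Lemma zeta1 : zeta 1 = 1.
Proof. by rewrite /zeta rmorph1 mulr1 mulr_natl cos2pi sin2pi oppr0. Qed.

Lemma zetaN a : zeta (- a) * zeta a = 1.
Proof. by rewrite -zetaD addNr zeta0. Qed.

Lemma zeta_neq0 a : zeta a != 0.
Proof. apply/negP => /eqP H; have := zetaN a; rewrite H mulr0 => /eqP; by rewrite eq_sym oner_eq0. Qed.

Lemma zeta_int (n : int) : zeta n%:~R = 1.
Proof.
have hn : forall m : nat, zeta m%:R = 1.
  elim=> [|m IH]; first by rewrite zeta0.
  by rewrite -addn1 natrD zetaD IH zeta1 mulr1.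
case: n => m; first by rewrite hn.
have := zetaN (m.+1%:R); rewrite hn mulr1 => <-.
by rewrite NegzE mulrNz.
Qed.

Lemma zetainvE a : @zetainv R a = zeta (- a).
Proof. by rewrite /zetainv /zeta rmorphN /= mulrN cosN sinN opprK. Qed.

Lemma galE (q : EF) k : gal q k = q k * zeta k.
Proof. rewrite /gal fsfunE; case: finsuppP => //; by rewrite mul0r. Qed.

Lemma galinvE (q : EF) k : galinv q k = q k * zeta (- k).
Proof. rewrite /galinv fsfunE -zetainvE; case: finsuppP => //; by rewrite mul0r. Qed.

Lemma galzE i (q : EF) k : galz i q k = q k * zeta (k * i%:~R).
Proof.
case: i => n /=.
  elim: n => [|n IH]; first by rewrite mulr0 zeta0 mulr1.
  rewrite iterS galE IH -mulrA -zetaD; congr (_ * zeta _).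
  by rewrite -[in RHS]addn1 PoszD intrD mulrDr mulr1.
have -> : (Negz n)%:~R = - (n.+1)%:R :> rat by rewrite NegzE intrN.
elim: n => [|n IH]; first by rewrite /= galinvE mulrN mulr1.
rewrite iterS galinvE IH -mulrA -zetaD; congr (_ * zeta _).
by rewrite -[n.+2]addn1 natrD opprD mulrDr mulrN1 addrC.
Qed.

Lemma galz0 (q : EF) : galz 0 q = q.
Proof. by []. Qed.

Lemma galzD i j (q : EF) : galz i (galz j q) = galz (i + j) q.
Proof.
apply/fsfunP => k; rewrite !galzE -mulrA -zetaD; congr (_ * zeta _).
by rewrite intrD mulrDr addrC.
Qed.

Lemma orbitP (a b : EF) : orbit_eq a b <-> exists i, a = galz i b.
Proof.
split.
  by move=> H; apply/H; exists 0.
move=> [i ->] c; split.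
  by move=> [j ->]; exists (j + i); rewrite galzD.
move=> [j ->]; exists (j - i); by rewrite galzD subrK.
Qed.

Lemma subEFE (p q : EF) k : subEF p q k = p k - q k.
Proof.
rewrite /subEF fsfunE inE.
case: finsuppP => [_|Hp]; case: finsuppP => [_|Hq] //=.
by rewrite subr0.
Qed.

Lemma truncE c (q : EF) k : trunc c q k = if c <= k then q k else 0.
Proof.
rewrite /trunc fsfunE; case: finsuppP => //; by case: ifP.
Qed.

Lemma ef0E k : ef0 R k = 0.
Proof. by rewrite /ef0 fsfunE inE. Qed.

Lemma bigmax_prop (s : seq rat) :
  let m := \big[Num.max/0]_(k <- s) k in
  0 <= m /\ (forall x, x \in s -> x <= m) /\ (m != 0 -> m \in s).
Proof.
elim: s => [|a s [IH1 [IH2 IH3]]] /=; rewrite ?big_nil ?big_cons.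
  by split => //; split.
split; first by rewrite le_max IH1 orbT.
split.
  move=> x; rewrite inE => /orP [/eqP ->|/IH2 H]; rewrite le_max ?lexx //.
  by rewrite H orbT.
rewrite maxEle; case: ifP => _ H; rewrite inE ?eqxx //.
by rewrite IH3 ?orbT.
Qed.

Definition D (p q : EF) := slope (subEF p q).

Lemma D_ge0 (p q : EF) : 0 <= D p q.
Proof. exact: (bigmax_prop _).1. Qed.

Lemma D_ge (p q : EF) x : p x != q x -> x <= D p q.
Proof.
move=> H; apply: (bigmax_prop _).2.1.
by rewrite mem_finsupp subEFE subr_eq0.
Qed.

Lemma D_mem (p q : EF) : D p q != 0 -> p (D p q) != q (D p q).
Proof.
move=> /(bigmax_prop _).2.2; rewrite mem_finsupp subEFE subr_eq0 //.
Qed.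

Lemma D_le (p q : EF) b : 0 <= b -> (forall x, p x != q x -> x <= b) -> D p q <= b.
Proof.
move=> H0 H; have [->//|/D_mem] := eqVneq (D p q) 0.
exact: H.
Qed.

Lemma D_ext (p q p' q' : EF) : (forall x, (p x != q x) = (p' x != q' x)) -> D p q = D p' q'.
Proof.
move=> H; apply/le_anti/andP; split; apply: D_le; rewrite ?D_ge0 // => x.
  by rewrite H; apply: D_ge.
by rewrite -H; apply: D_ge.
Qed.

Lemma Dxx (p : EF) : D p p = 0.
Proof. by apply/le_anti; rewrite D_ge0 andbT; apply: D_le => // x; rewrite eqxx. Qed.

Lemma expfac_pos (q : EF) x : expfac q -> q x != 0 -> 0 < x.
Proof. by move=> H Hx; apply: H; rewrite mem_finsupp. Qed.

Lemma D0_eq (p q : EF) : expfac p -> expfac q -> D p q = 0 -> p = q.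
Proof.
move=> Hp Hq HD; apply/fsfunP => x; apply/eqP/negPn/negP => Hx.
have := D_ge Hx; rewrite HD.
have : 0 < x.
  have [Hp0|Hp0] := eqVneq (p x) 0; last exact: expfac_pos Hp0.
  apply: (expfac_pos Hq); move: Hx; by rewrite Hp0 eq_sym.
by move=> /lt_geF ->.
Qed.

Lemma galz_neq a (u v : EF) x : (galz a u x != galz a v x) = (u x != v x).
Proof. by rewrite !galzE (inj_eq (mulIf (zeta_neq0 _))). Qed.

Lemma D_galz a b (p q : EF) : D (galz a p) (galz b q) = D p (galz (b - a) q).
Proof.
apply: D_ext => x; have -> : galz b q = galz a (galz (b - a) q) by rewrite galzD addrC subrK.
by rewrite galz_neq.

Qed.

Lemma trunc_galz c d (q : EF) : trunc c (galz d q) = galz d (trunc c q).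
Proof.
apply/fsfunP => x; rewrite truncE !galzE truncE; case: ifP => //; by rewrite mul0r.
Qed.

Lemma trunc_eqP c (p q : EF) : 0 < c -> (trunc c p = trunc c q <-> D p q < c).
Proof.
move=> c0; split.
  move=> H; have [->//|/D_mem HD] := eqVneq (D p q) 0.
  rewrite ltNge; apply/negP => Hc; move: HD.
  by move/fsfunP: H => /(_ (D p q)); rewrite !truncE Hc => ->; rewrite eqxx.
move=> H; apply/fsfunP => x; rewrite !truncE; case: ifP => // Hc.
apply/eqP/negPn/negP => /D_ge Hx.
by have := le_lt_trans Hc (le_lt_trans Hx H); rewrite ltxx.
Qed.

Definition sl (q : EF) (d : int) := D q (galz d q).

Lemma sl_prop (q : EF) d : sl q d != 0 ->
  q (sl q d) != 0 /\ zeta (sl q d * d%:~R) != 1.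
Proof.
move=> /D_mem; rewrite galzE; set x := sl q d; set z := zeta _ => H.
split; apply/negP => /eqP H1; move: H; rewrite H1 ?mul0r ?mulr1 eqxx //.
Qed.

Lemma sl_ge (q : EF) d x : q x != 0 -> zeta (x * d%:~R) != 1 -> x <= sl q d.
Proof.
move=> Hq Hz; apply: D_ge; rewrite galzE.
apply/negP => /eqP H; apply/negP: Hz; apply/negPn/eqP; apply: (mulfI Hq).
by rewrite mulr1 -H.
Qed.

Lemma levels_le (q q' : EF) d : levels q' = levels q -> sl q d <= sl q' d.
Proof.
move=> HL; have [->|Hx] := eqVneq (sl q d) 0; first exact: D_ge0.
have [Hq Hz] := sl_prop Hx.
have : levels q (sl q d) by split => //; exists d.
rewrite -HL => -[[e He] Hx0].
have Hq' : q' (sl q d) != 0.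
  have := @sl_prop q' e; change (sl q d = sl q' e) in He; rewrite -He => /(_ Hx) [] //.
exact: sl_ge.
Qed.

Lemma levels_sl (q q' : EF) : levels q' = levels q -> forall d, sl q' d = sl q d.
Proof.
move=> HL d; apply/le_anti; rewrite levels_le //.
by rewrite levels_le.
Qed.

Lemma sl_levels (q q' : EF) : (forall d, sl q' d = sl q d) -> levels q' = levels q.
Proof.
move=> H; apply/funext => x; apply/propext; rewrite /levels.
split => -[[i ->] Hx]; split => //; exists i; [exact: (H i) | exact: (esym (H i))].
Qed.

Lemma core (q h : EF) (f : rat) (d : int) (B : rat -> bool)
 (HB : forall x, B x -> h x = q x)
 (Hf0 : 0 <= f)
 (Hf2 : forall x, ~~ B x -> (q x != 0) || (h x != 0) -> x <= f)
 (Hf3 : f != 0 -> ~~ B f /\ ((q f != 0) || (h f != 0)))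
 (Hmin : forall e, ~~ B e -> q e != 0 -> orbit_eq (trunc e q) (trunc e h) -> False) :
 D q (galz d h) = if f < sl q d then sl q d else f.
Proof.
have P3 : forall x, q x != q x * zeta (x * d%:~R) -> x <= sl q d.
  by move=> x Hx; apply: D_ge; rewrite galzE.
have Pnb : forall x, ~~ B x -> q x != galz d h x -> x <= f.
  move=> x Hb Hx; apply: Hf2 => //; apply/negPn/negP; rewrite negb_or !negbK.
  move=> /andP [/eqP Hq /eqP Hh]; move: Hx; by rewrite galzE Hq Hh mul0r eqxx.
have s0 := D_ge0 q (galz d q).
case: ifP => Hfs.
  have sn0 : sl q d != 0 by apply/negP => /eqP H; move: Hfs; rewrite H ltNge Hf0.
  have Hs := D_mem sn0.
  have Bs : B (sl q d).
    apply/negPn/negP => Hb; have := Hf2 _ Hb; rewrite (sl_prop sn0).1 /= => /(_ isT).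
    by rewrite leNgt Hfs.
  apply/le_anti/andP; split.
    apply: D_le => // x Hx; case Bx: (B x).
      by apply: D_ge; move: Hx; rewrite !galzE (HB _ Bx).
    by apply/ltW/(le_lt_trans _ Hfs)/Pnb => //; rewrite Bx.
  by apply: D_ge; move: Hs; rewrite !galzE (HB _ Bs).
move/negbT: Hfs; rewrite -leNgt => Hsf.
apply/le_anti/andP; split.
  apply: D_le => // x Hx; case Bx: (B x).
    by apply/(le_trans _ Hsf); apply: D_ge; move: Hx; rewrite !galzE (HB _ Bx).
  by apply: Pnb => //; rewrite Bx.
have [->|fn0] := eqVneq f 0; first exact: D_ge0.
apply: D_ge; rewrite galzE; apply/negP => /eqP H.
have [Hnb Hnz] := Hf3 fn0.
have Hqf : q f != 0.
  apply/negP => /eqP Hq; move: Hnz H; rewrite Hq eqxx /= => Hh /esym /eqP.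
  by rewrite mulf_eq0 (negPf Hh) (negPf (zeta_neq0 _)).
apply: (Hmin f Hnb Hqf); apply/orbitP; exists d; apply/fsfunP => x.
rewrite galzE !truncE; case: ifP => Hfx; last by rewrite mul0r.
have [<-//|Hne] := eqVneq f x.
have Hlt : f < x by rewrite lt_def eq_sym Hne Hfx.
case Bx: (B x).
  rewrite (HB _ Bx); apply/eqP/negPn/negP => /P3 Hx.
  by have := le_lt_trans (le_trans Hx Hsf) Hlt; rewrite ltxx.
have : ~~ ((q x != 0) || (h x != 0)).
  by apply/negP => /(Hf2 _ (negbT Bx)); rewrite leNgt Hlt.
by rewrite negb_or !negbK => /andP [/eqP -> /eqP ->]; rewrite mul0r.
Qed.

Lemma bigmin_prop (s : seq rat) x0 :
  let m := \big[Num.min/x0]_(k <- s) k in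
  m \in x0 :: s /\ m <= x0 /\ (forall x, x \in s -> m <= x).
Proof.
elim: s => [|a s [IH1 [IH2 IH3]]] /=; rewrite ?big_nil ?big_cons.
  by rewrite inE eqxx lexx.
split.
  rewrite minEle; case: ifP => _; rewrite !inE ?eqxx ?orbT //.
  by move: IH1; rewrite inE => /orP [/eqP ->|->]; rewrite ?eqxx ?orbT.
split; first by rewrite ge_min IH2 orbT.
move=> x; rewrite inE => /orP [/eqP ->|/IH3 H]; rewrite ge_min ?lexx //.
by rewrite H orbT.
Qed.

Definition compat_pair (q h : EF) :=
  forall k : rat, 0 < k -> orbit_eq (trunc k q) (trunc k h) -> trunc k q = trunc k h.

Lemma max_prop (a b : rat) : 0 <= a -> 0 <= b ->
  0 <= Num.max a b /\ a <= Num.max a b /\ b <= Num.max a b /\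
  (Num.max a b = a \/ Num.max a b = b).
Proof.
move=> a0 b0; rewrite !le_max a0 !lexx ?orbT /=; split => //.
by rewrite maxEle; case: ifP; auto.
Qed.

Lemma fission_formula (q h : EF) d : expfac q -> compat_pair q h ->
  D q (galz d h) = if fission q h < sl q d then sl q d else fission q h.
Proof.
move=> Eq Hc; rewrite /fission.
set S := [seq _ <- _ | _].
have memS : forall e, e \in finsupp q -> orbit_eq (trunc e q) (trunc e h) -> e \in S.
  by move=> e He Ho; rewrite mem_filter He andbT; apply/asboolP.
case ES: S => [|a l].
  rewrite -/(D q (ef0 R)) -/(D h (ef0 R)).
  have [M0 [M1 [M2 M3]]] := max_prop (D_ge0 q (ef0 R)) (D_ge0 h (ef0 R)).
  apply: (@core q h _ d (fun _ => false)) => //.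
  - move=> x _ /orP [Hx|Hx].
      by apply/(le_trans _ M1)/D_ge; rewrite ef0E.
    by apply/(le_trans _ M2)/D_ge; rewrite ef0E.
  - move=> fn0; split => //.
    case: M3 => Hm; rewrite Hm in fn0 *; have := D_mem fn0; rewrite ef0E => ->;
      by rewrite ?orbT.
  - move=> e _ He Ho; have := memS e; rewrite ES mem_finsupp He => /(_ isT Ho).
    by rewrite in_nil.
have [k1 [k2 k3]] := bigmin_prop l a.
rewrite /min_seq /=.
set k := \big[Num.min/a]_(k <- a :: l) k.
have kS : k \in S.
  rewrite ES; move: k1; rewrite /= !inE /k big_cons minEle.
  case: ifP => _; first by rewrite eqxx.
  by move=> /orP [/eqP ->|->]; rewrite ?eqxx ?orbT.
have kmin : forall x, x \in S -> k <= x.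
  move=> x; rewrite ES inE => /orP [/eqP ->|Hx].
    by rewrite /k big_cons ge_min lexx.
  by rewrite /k big_cons ge_min (k3 _ Hx) orbT.
move: (kS); rewrite mem_filter => /andP [/asboolP Ho Hk].
have k0 : 0 < k by apply: Eq.
have Heq := Hc k k0 Ho.
rewrite -/(D q (trunc k q)) -/(D h (trunc k h)).
have [M0 [M1 [M2 M3]]] := max_prop (D_ge0 q (trunc k q)) (D_ge0 h (trunc k h)).
apply: (@core q h _ d (fun x => k <= x)) => //.
- move=> x Hx; move/fsfunP: Heq => /(_ x); by rewrite !truncE Hx.
- move=> x Hx /orP [Hq|Hh].
    by apply/(le_trans _ M1)/D_ge; rewrite truncE ifN.
  by apply/(le_trans _ M2)/D_ge; rewrite truncE ifN.
- move=> fn0.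
  case: M3 => Hm; rewrite Hm in fn0 *; have := D_mem fn0; rewrite truncE;
    case: ifP => Hkk; rewrite ?eqxx // => Hne; (split; [by apply/negbT | by rewrite Hne ?orbT]).
- move=> e He Hqe Ho'; have := kmin e (memS e _ Ho').
  by rewrite mem_finsupp Hqe (negPf He) => /(_ isT).
Qed.

Lemma fission_ge0 (q h : EF) : 0 <= fission q h.
Proof.
rewrite /fission; case: [seq _ <- _ | _] => [|a l];
  by rewrite le_max (bigmax_prop _).1.
Qed.

Lemma fission_D (q h : EF) : expfac q -> compat_pair q h -> fission q h = D q h.
Proof.
move=> Eq Hc; have := fission_formula 0 Eq Hc.
rewrite /sl galz0 Dxx ltNge fission_ge0 /= => <-; by [].
Qed.

Lemma denq_int (x : rat) : x * (absz (denq x))%:R \is a Num.int.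
Proof.
have -> : (absz (denq x))%:R = (denq x)%:~R :> rat by case: (denqP x) => d ->.
by rewrite -numqE intr_int.
Qed.

Lemma prod_den_int (s : seq rat) x : x \in s ->
  x * (\prod_(k <- s) absz (denq k))%:R \is a Num.int.
Proof.
elim: s => [|a s IH] //; rewrite inE big_cons natrM => /orP [/eqP ->|Hx].
  by rewrite mulrA rpredM ?denq_int // rpred_nat.
by rewrite mulrCA rpredM ?IH // rpred_nat.
Qed.

Lemma ram_predP (q : EF) : ram_pred q (ram q).
Proof.
rewrite /ram; case: pselect => [h|nh]; first by case: ex_minnP.
exfalso; apply: nh; exists (\prod_(k <- finsupp q) absz (denq k)).
apply/andP; split.
  rewrite prodn_gt0 // => k; rewrite absz_gt0; by case: (denqP k).
by apply/allP => x Hx; apply: prod_den_int.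
Qed.

Lemma ram_gt0 (q : EF) : (0 < ram q)%N.
Proof. by case/andP: (ram_predP q). Qed.

Lemma galz_ram (q : EF) : galz (ram q) q = q.
Proof.
apply/fsfunP => k; rewrite galzE; case: (finsuppP q k) => [_|Hk]; first by rewrite mul0r.
case/andP: (ram_predP q) => _ /allP /(_ k Hk) /intrP [m Hm].
by rewrite Hm zeta_int mulr1.
Qed.

Definition red (c : int) (r : nat) : nat := (absz (c + (r * absz c)%N%:Z)%R %% r)%N.

Lemma red_lt c r : (0 < r)%N -> (red c r < r)%N.
Proof. by move=> r0; rewrite /red ltn_mod. Qed.

Lemma galz_red (p : EF) (r : nat) c : (0 < r)%N -> galz r p = p -> galz c p = galz (red c r) p.
Proof.
move=> r0 Hr.
have shift : forall c' (m : nat), galz (c' + (r * m)%N%:Z) p = galz c' p.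
  move=> c'; elim=> [|m IH]; first by rewrite muln0 addr0.
  have -> : c' + (r * m.+1)%N%:Z = (c' + (r * m)%N%:Z) + r%:Z by lia.
  by rewrite -galzD Hr IH.
rewrite -(shift c (absz c)).
have HN : c + (r * absz c)%N%:Z = (absz (c + (r * absz c)%N%:Z))%:Z.
  have : 0 <= c + (r * absz c)%N%:Z.
    case: c => n /=; first by lia.
    rewrite NegzE; nia.
  by move/gez0_abs => ->.
rewrite HN /red; set N := absz _.
have -> : N%:Z = (N %% r)%N%:Z + (r * (N %/ r))%N%:Z.
  by rewrite {1}(divn_eq N r) -PoszD addnC mulnC.
by rewrite shift.
Qed.

Lemma expfac_galz d (q : EF) : expfac q -> expfac (galz d q).
Proof.
move=> H k; rewrite mem_finsupp galzE mulf_eq0 negb_or => /andP [Hk _].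
by apply: H; rewrite mem_finsupp.
Qed.

End S.

Theorem mainTheorem7 (R : realType) (Q Q' : seq (nat * EF R)) :
  compatible Q ->
  (forall i, (i < size Q')%N -> (0 < nQ Q' i)%N /\ expfac (qQ Q' i)) ->
  (sim Q' Q <-> compatible Q' /\ same_fission_datum Q' Q).
Proof.
move=> [[HQ1 HQ2] HQ3] HQ'.
have cpQ : forall i j, (i < size Q)%N -> (j < size Q)%N -> compat_pair (qQ Q i) (qQ Q j).
  by move=> i j Hi Hj k k0; apply: HQ3.
split.
- move=> [Hs [Hn Hsl]].
  have HQ'' : forall i, (i < size Q)%N -> expfac (qQ Q' i).
    by move=> i Hi; apply: (HQ' i _).2; rewrite Hs.
  have per' : forall i, (i < size Q)%N -> galz (ram (qQ Q i)) (qQ Q' i) = qQ Q' i.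
    move=> i Hi; apply/esym/D0_eq; [exact: HQ'' | exact/expfac_galz/HQ'' |].
    have := Hsl i i Hi Hi 0%N (ram (qQ Q i)) (leq0n _) (leqnn _).
    change (D (qQ Q' i) (galz (ram (qQ Q i)) (qQ Q' i)) =
            D (qQ Q i) (galz (ram (qQ Q i)) (qQ Q i)) -> D (qQ Q' i) (galz (ram (qQ Q i)) (qQ Q' i)) = 0).
    by rewrite galz_ram Dxx.
  have key : forall i j c, (i < size Q)%N -> (j < size Q)%N ->
      D (qQ Q' i) (galz c (qQ Q' j)) = D (qQ Q i) (galz c (qQ Q j)).
    move=> i j c Hi Hj.
    rewrite (galz_red c (ram_gt0 _) (per' j Hj)) (galz_red c (ram_gt0 _) (galz_ram _)).
    exact: (Hsl i j Hi Hj 0%N _ (leq0n _) (ltnW (red_lt _ (ram_gt0 _)))).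
  have cQ' : compatible Q'.
    split; first split.
    + by move=> i Hi; apply: HQ'.
    + move=> i j Hi Hj Hij /orbitP [c Hc]; rewrite Hs in Hi Hj.
      apply: (HQ2 i j Hi Hj Hij); apply/orbitP; exists c.
      apply: D0_eq; [exact: (HQ1 i Hi).2 | exact/expfac_galz/(HQ1 j Hj).2 |].
      by rewrite -key // -Hc Dxx.
    + move=> k k0 i j Hi Hj /orbitP [c Hc]; rewrite Hs in Hi Hj.
      apply/(trunc_eqP _ _ k0); have := key i j 0 Hi Hj; rewrite galz0 => ->.
      apply/(trunc_eqP _ _ k0); apply: (HQ3 k k0 i j Hi Hj).
      apply/orbitP; exists c; rewrite -trunc_galz; apply/(trunc_eqP _ _ k0).
      rewrite -key //; apply/(trunc_eqP _ _ k0); by rewrite trunc_galz.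
  split => //; split => //; split.
    move=> i Hi; split; first exact: Hn.
    by apply: sl_levels => d; apply: key.
  move=> i j Hi Hj Hij.
  have cp' : compat_pair (qQ Q' i) (qQ Q' j).
    by move=> k k0; apply: cQ'.2; rewrite ?Hs.
  rewrite !fission_D //; [|exact: (HQ1 i Hi).2|exact: cpQ|exact: HQ''].
  have := key i j 0 Hi Hj; by rewrite !galz0.
- move=> [[[HP1 HP2] HP3] [Hs [Hn Hf]]].
  split => //; split; first by move=> i /Hn [].
  move=> i j Hi Hj k l _ _.
  change (D (galz k (qQ Q' i)) (galz l (qQ Q' j)) = D (galz k (qQ Q i)) (galz l (qQ Q j))).
  rewrite !D_galz.
  have HL := levels_sl (Hn i Hi).2.
  have [<-|Hij] := eqVneq i j; first exact: HL.
  have cp' : compat_pair (qQ Q' i) (qQ Q' j).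
    by move=> k' k0; apply: HP3; rewrite ?Hs.
  rewrite !fission_formula //.
  - by rewrite HL (Hf i j Hi Hj) //; apply/eqP.
  - exact: (HQ1 i Hi).2.
  - exact: cpQ.
  - by apply: (HP1 i _).2; rewrite Hs.
Qed.
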